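(* Let $\Delta\subset\mathbb{R}^2$ be a lattice polygon with $\operatorname{lw}(\Delta)=d>0$. Let $P$ be a vertex of $\Delta$ and let $v\in\mathbb{Z}^2$ be a primitive vector. If $\operatorname{lw}_v(\Delta_P)<d$ and $\operatorname{lw}_v(\Delta_P)<\operatorname{lw}_v(\Delta)-1$, then $\Delta$ is unimodularly equivalent to $\Upsilon_{d-1}:=\operatorname{conv}\{(0,0),(1,d),(d,1)\}$.
   Context: A lattice polygon is the convex hull of a finite non-empty set of points of $\mathbb{Z}^2$. For a lattice polygon $\Delta$ and a non-zero primitive $v\in\mathbb{Z}^2$, $\operatorname{lw}_v(\Delta)=\max_{Q\in\Delta}\langle Q,v\rangle-\min_{Q\in\Delta}\langle Q,v\rangle$, and $\operatorname{lw}(\Delta)=\min_v\operatorname{lw}_v(\Delta)$ over all non-zero primitive $v\in\mathbb{Z}^2$. For a vertex $P$ of $\Delta$, $\Delta_P:=\operatorname{conv}((\Delta\cap\mathbb{Z}^2)\setminus\{P\})$. Two lattice polygons are (unimodularly) equivalent if one is the image of the other under a map $x\mapsto Ax+b$ with $A\in\mathrm{GL}_2(\mathbb{Z})$, $b\in\mathbb{Z}^2$. *)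

(* Defs.v *)
From Stdlib Require Import Reals ZArith List.
Open Scope R_scope.

Definition zpt := (Z * Z)%type.
Definition rpt := (R * R)%type.

Definition toR (p : zpt) : rpt := (IZR (fst p), IZR (snd p)).

Definition dot (q : rpt) (v : zpt) : R :=
  fst q * IZR (fst v) + snd q * IZR (snd v).

Definition convZ (A : zpt -> Prop) (x : rpt) : Prop :=
  exists l : list (R * zpt),
    Forall (fun cq => 0 <= fst cq /\ A (snd cq)) l /\
    fold_right (fun cq s => fst cq + s) 0 l = 1 /\
    fst x = fold_right (fun cq s => fst cq * IZR (fst (snd cq)) + s) 0 l /\
    snd x = fold_right (fun cq s => fst cq * IZR (snd (snd cq)) + s) 0 l.

Definition polygon (S : list zpt) : rpt -> Prop := convZ (fun z => In z S).

Definition is_vertex (D : rpt -> Prop) (x : rpt) : Prop :=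
  D x /\ forall y z t, D y -> D z -> 0 < t < 1 ->
    x = (t * fst y + (1 - t) * fst z, t * snd y + (1 - t) * snd z) -> y = z.

(* Delta_P := conv((Delta ∩ Z^2) \ {P}) *)
Definition remove_vertex (D : rpt -> Prop) (P : zpt) : rpt -> Prop :=
  convZ (fun z => D (toR z) /\ z <> P).

Definition primitive_vec (v : zpt) : Prop := Z.gcd (fst v) (snd v) = 1%Z.

(* lw_v(D) = w : max_{Q in D} <Q,v> - min_{Q in D} <Q,v> = w
   (both extrema attained, as D is compact) *)
Definition lw_dir (D : rpt -> Prop) (v : zpt) (w : R) : Prop :=
  (exists x y, D x /\ D y /\ dot y v - dot x v = w) /\
  (forall x y, D x -> D y -> dot y v - dot x v <= w).

Definition lw (D : rpt -> Prop) (w : R) : Prop :=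
  (exists v, primitive_vec v /\ lw_dir D v w) /\
  (forall v w', primitive_vec v -> lw_dir D v w' -> w <= w').

Definition unimod_equiv (D1 D2 : rpt -> Prop) : Prop :=
  exists a11 a12 a21 a22 b1 b2 : Z,
    (a11 * a22 - a12 * a21 = 1 \/ a11 * a22 - a12 * a21 = -1)%Z /\
    forall x : rpt, D2 x <-> exists y : rpt, D1 y /\
      x = (IZR a11 * fst y + IZR a12 * snd y + IZR b1,
           IZR a21 * fst y + IZR a22 * snd y + IZR b2).

(* Upsilon_{d-1} := conv{(0,0),(1,d),(d,1)} *)
Definition Upsilon_pred (d : Z) : rpt -> Prop :=
  polygon ((0,0)%Z :: (1,d)%Z :: (d,1)%Z :: nil).

(* Main.v *)
Require Import Defs.
From Stdlib Require Import Reals ZArith List Lra Lia Psatz Classical.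
Open Scope R_scope.

Definition dotZ (z v : zpt) : Z := (fst z * fst v + snd z * snd v)%Z.

Lemma conv_le (A : zpt -> Prop) (x : rpt) (c1 c2 c0 M : R):
  convZ A x -> (forall z, A z -> c1 * IZR (fst z) + c2 * IZR (snd z) + c0 <= M) ->
  c1 * fst x + c2 * snd x + c0 <= M.
Proof.
  intros [l [Hf [H1 [Hx Hy]]]] Hz. rewrite Hx, Hy.
  assert (G: c1 * fold_right (fun (cq : R * zpt) (s : R) => fst cq * IZR (fst (snd cq)) + s) 0 l
           + c2 * fold_right (fun (cq : R * zpt) (s : R) => fst cq * IZR (snd (snd cq)) + s) 0 l
           + c0 * fold_right (fun (cq : R * zpt) (s : R) => fst cq + s) 0 l
           <= M * fold_right (fun (cq : R * zpt) (s : R) => fst cq + s) 0 l).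
  { clear H1 Hx Hy. induction l as [|[c q] l IH]; simpl. lra.
    inversion Hf as [|? ? [Hc HA] Hf']; subst. simpl in Hc, HA.
    specialize (IH Hf'). specialize (Hz q HA).
    assert (0 <= c * (M - (c1 * IZR (fst q) + c2 * IZR (snd q) + c0))) by (apply Rmult_le_pos; lra).
    nra. }
  rewrite H1 in G. unfold zpt in *. lra.
Qed.

Definition scl (r : R) (l : list (R * zpt)) := map (fun cq => (r * fst cq, snd cq)) l.

Lemma scl_w r l : fold_right (fun (cq : R * zpt) (s : R) => fst cq + s) 0 (scl r l) = r * fold_right (fun (cq : R * zpt) (s : R) => fst cq + s) 0 l.
Proof. induction l as [|[c q] l IH]; simpl. ring. rewrite IH. ring. Qed.
Lemma scl_x r l : fold_right (fun (cq : R * zpt) (s : R) => fst cq * IZR (fst (snd cq)) + s) 0 (scl r l) = r * fold_right (fun (cq : R * zpt) (s : R) => fst cq * IZR (fst (snd cq)) + s) 0 l.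
Proof. induction l as [|[c q] l IH]; simpl. ring. rewrite IH. ring. Qed.
Lemma scl_y r l : fold_right (fun (cq : R * zpt) (s : R) => fst cq * IZR (snd (snd cq)) + s) 0 (scl r l) = r * fold_right (fun (cq : R * zpt) (s : R) => fst cq * IZR (snd (snd cq)) + s) 0 l.
Proof. induction l as [|[c q] l IH]; simpl. ring. rewrite IH. ring. Qed.
Lemma app_w l1 l2 : fold_right (fun (cq : R * zpt) (s : R) => fst cq + s) 0 (l1 ++ l2) = fold_right (fun (cq : R * zpt) (s : R) => fst cq + s) 0 l1 + fold_right (fun (cq : R * zpt) (s : R) => fst cq + s) 0 l2.
Proof. induction l1 as [|[c q] l IH]; simpl. ring. rewrite IH. ring. Qed.
Lemma app_x l1 l2 : fold_right (fun (cq : R * zpt) (s : R) => fst cq * IZR (fst (snd cq)) + s) 0 (l1 ++ l2) = fold_right (fun (cq : R * zpt) (s : R) => fst cq * IZR (fst (snd cq)) + s) 0 l1 + fold_right (fun (cq : R * zpt) (s : R) => fst cq * IZR (fst (snd cq)) + s) 0 l2.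
Proof. induction l1 as [|[c q] l IH]; simpl. ring. rewrite IH. ring. Qed.
Lemma app_y l1 l2 : fold_right (fun (cq : R * zpt) (s : R) => fst cq * IZR (snd (snd cq)) + s) 0 (l1 ++ l2) = fold_right (fun (cq : R * zpt) (s : R) => fst cq * IZR (snd (snd cq)) + s) 0 l1 + fold_right (fun (cq : R * zpt) (s : R) => fst cq * IZR (snd (snd cq)) + s) 0 l2.
Proof. induction l1 as [|[c q] l IH]; simpl. ring. rewrite IH. ring. Qed.
Lemma scl_F (A : zpt -> Prop) r l : 0 <= r -> Forall (fun cq => 0 <= fst cq /\ A (snd cq)) l ->
  Forall (fun cq => 0 <= fst cq /\ A (snd cq)) (scl r l).
Proof.
  intros Hr H. induction H as [|[c q] l [Hc HA] _ IH]; simpl; constructor; auto.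
  simpl in *. split; [nra|auto].
Qed.

Lemma conv3 (A : zpt -> Prop) x y z r s t :
  convZ A x -> convZ A y -> convZ A z -> 0 <= r -> 0 <= s -> 0 <= t -> r + s + t = 1 ->
  convZ A (r * fst x + s * fst y + t * fst z, r * snd x + s * snd y + t * snd z).
Proof.
  intros [l1 [F1 [W1 [X1 Y1]]]] [l2 [F2 [W2 [X2 Y2]]]] [l3 [F3 [W3 [X3 Y3]]]] Hr Hs Ht Hsum.
  exists (scl r l1 ++ scl s l2 ++ scl t l3). split; [|split; [|split]].
  - apply Forall_app; split; [apply scl_F; auto|].
    apply Forall_app; split; apply scl_F; auto.
  - rewrite !app_w, !scl_w, W1, W2, W3. lra.
  - simpl. rewrite !app_x, !scl_x, X1, X2, X3. unfold zpt in *; ring.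
  - simpl. rewrite !app_y, !scl_y, Y1, Y2, Y3. unfold zpt in *; ring.
Qed.

Lemma conv1 (A : zpt -> Prop) z : A z -> convZ A (toR z).
Proof.
  intros H. exists ((1, z) :: nil). simpl. split; [constructor; [simpl; split; [lra|exact H]|constructor]|]. unfold toR; simpl. repeat split; ring.
Qed.

Lemma list_max (S : list zpt) (f : zpt -> Z) : S <> nil ->
  exists s, In s S /\ forall z, In z S -> (f z <= f s)%Z.
Proof.
  intros HS. induction S as [|a S IH]. congruence.
  destruct S as [|b S'].
  - exists a. split. left; auto. intros z [->|[]]. lia.
  - destruct IH as [s [Hs Hm]]. congruence.
    destruct (Z.le_gt_cases (f a) (f s)).
    + exists s. split. right; auto. intros z [->|Hz]. lia. apply Hm; auto.
    + exists a. split. left; auto. intros z [->|Hz]. lia. specialize (Hm z Hz). lia.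
Qed.

Lemma list_min (S : list zpt) (f : zpt -> Z) : S <> nil ->
  exists s, In s S /\ forall z, In z S -> (f s <= f z)%Z.
Proof.
  intros HS. destruct (list_max S (fun z => - f z)%Z HS) as [s [Hs Hm]].
  exists s. split; auto. intros z Hz. specialize (Hm z Hz). lia.
Qed.

Lemma dot_toR z v : dot (toR z) v = IZR (dotZ z v).
Proof. unfold dot, toR, dotZ; simpl. rewrite plus_IZR, !mult_IZR. ring. Qed.

Lemma conv_dot_le A x w M : convZ A x -> (forall z, A z -> (dotZ z w <= M)%Z) -> dot x w <= IZR M.
Proof.
  intros Hx Hz. unfold dot.
  assert (H := conv_le A x (IZR (fst w)) (IZR (snd w)) 0 (IZR M) Hx).
  rewrite Rmult_comm, (Rmult_comm (snd x)).
  enough (IZR (fst w) * fst x + IZR (snd w) * snd x + 0 <= IZR M) by lra.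
  apply H. intros z Hz'. specialize (Hz z Hz'). apply IZR_le in Hz.
  rewrite <- dot_toR in Hz. unfold dot, toR in Hz; simpl in Hz. lra.
Qed.

Lemma conv_dot_ge A x w m : convZ A x -> (forall z, A z -> (m <= dotZ z w)%Z) -> IZR m <= dot x w.
Proof.
  intros Hx Hz. unfold dot.
  assert (H := conv_le A x (- IZR (fst w)) (- IZR (snd w)) 0 (- IZR m) Hx).
  enough (- IZR (fst w) * fst x + - IZR (snd w) * snd x + 0 <= - IZR m) by lra.
  apply H. intros z Hz'. specialize (Hz z Hz'). apply IZR_le in Hz.
  rewrite <- dot_toR in Hz. unfold dot, toR in Hz; simpl in Hz. lra.
Qed.

Lemma lw_dir_pair S w W : S <> nil -> lw_dir (polygon S) w W ->
  exists s1 s2, In s1 S /\ In s2 S /\ IZR (dotZ s2 w - dotZ s1 w) = W /\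
   (forall z, In z S -> dotZ s1 w <= dotZ z w <= dotZ s2 w)%Z.
Proof.
  intros HS [[x [y [Hx [Hy Hxy]]]] Hall].
  destruct (list_min S (fun z => dotZ z w) HS) as [s1 [H1 M1]].
  destruct (list_max S (fun z => dotZ z w) HS) as [s2 [H2 M2]].
  exists s1, s2. split; auto. split; auto. split.
  - apply Rle_antisym.
    + rewrite minus_IZR, <- !dot_toR. apply Hall; apply conv1; auto.
    + rewrite <- Hxy. rewrite minus_IZR.
      assert (dot y w <= IZR (dotZ s2 w)) by (apply (conv_dot_le _ _ _ _ Hy); auto).
      assert (IZR (dotZ s1 w) <= dot x w) by (apply (conv_dot_ge _ _ _ _ Hx); auto).
      lra.
  - intros z Hz. split; [apply M1|apply M2]; auto.
Qed.

Lemma lw_bound S d w m M : lw (polygon S) (IZR d) -> S <> nil -> primitive_vec w ->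
  (forall z, In z S -> m <= dotZ z w <= M)%Z -> (d <= M - m)%Z.
Proof.
  intros [_ Hlw] HS Hp Hb.
  destruct (list_min S (fun z => dotZ z w) HS) as [s1 [H1 M1]].
  destruct (list_max S (fun z => dotZ z w) HS) as [s2 [H2 M2]].
  assert (Hd : lw_dir (polygon S) w (IZR (dotZ s2 w - dotZ s1 w))).
  { split.
    - exists (toR s1), (toR s2). split; [apply conv1; auto|]. split; [apply conv1; auto|].
      rewrite !dot_toR, minus_IZR. ring.
    - intros x y Hx Hy.
      assert (dot y w <= IZR (dotZ s2 w)) by (apply (conv_dot_le _ _ _ _ Hy); auto).
      assert (IZR (dotZ s1 w) <= dot x w) by (apply (conv_dot_ge _ _ _ _ Hx); auto).
      rewrite minus_IZR. lra. }
  specialize (Hlw _ _ Hp Hd). apply le_IZR in Hlw.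
  destruct (Hb s1 H1), (Hb s2 H2). lia.
Qed.

Lemma seg_point A px py x y m :
  convZ A (toR (px, py)) -> convZ A (toR (px + m * x, py + m * y)%Z) -> (1 <= m)%Z ->
  convZ A (toR (px + x, py + y)%Z).
Proof.
  intros HP HQ Hm. apply IZR_le in Hm.
  assert (H := conv3 A _ _ _ (1 - 1 / IZR m) (1 / IZR m) 0 HP HQ HP).
  assert (0 < IZR m) by lra.
  assert (0 <= 1 / IZR m <= 1).
  { split. apply Rlt_le, Rdiv_lt_0_compat; lra.
    apply (Rmult_le_reg_r (IZR m)); auto. field_simplify; lra. }
  replace (toR (px + x, py + y)%Z) with
    ((1 - 1 / IZR m) * fst (toR (px, py)) + 1 / IZR m * fst (toR (px + m * x, py + m * y)%Z) + 0 * fst (toR (px, py)),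
     (1 - 1 / IZR m) * snd (toR (px, py)) + 1 / IZR m * snd (toR (px + m * x, py + m * y)%Z) + 0 * snd (toR (px, py))).
  - apply H; lra.
  - unfold toR; simpl. rewrite !plus_IZR, !mult_IZR. f_equal; field; lra.
Qed.

Lemma tri_point A px py a1 b1 a2 b2 u w :
  convZ A (toR (px, py)) -> convZ A (toR (px + a1 + a2, py + b1 + b2)%Z) ->
  convZ A (toR (px + u * a1 + w * a2, py + u * b1 + w * b2)%Z) ->
  (u <= 0)%Z -> (1 <= w)%Z ->
  convZ A (toR (px + a2, py + b2)%Z).
Proof.
  intros HP HQ HZ Hu Hw. apply IZR_le in Hu. apply IZR_le in Hw.
  set (U := IZR u) in *. set (W := IZR w) in *.
  assert (Hpos : 0 < W - U) by lra.
  assert (H := conv3 A _ _ _ ((W - 1) / (W - U)) (- U / (W - U)) (1 / (W - U)) HP HQ HZ).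
  replace (toR (px + a2, py + b2)%Z) with
    ((W - 1) / (W - U) * fst (toR (px, py)) + (- U / (W - U)) * fst (toR (px + a1 + a2, py + b1 + b2)%Z) + 1 / (W - U) * fst (toR (px + u * a1 + w * a2, py + u * b1 + w * b2)%Z),
     (W - 1) / (W - U) * snd (toR (px, py)) + (- U / (W - U)) * snd (toR (px + a1 + a2, py + b1 + b2)%Z) + 1 / (W - U) * snd (toR (px + u * a1 + w * a2, py + u * b1 + w * b2)%Z)).
  - apply H.
    + apply Rmult_le_pos; [lra|]. apply Rlt_le, Rinv_0_lt_compat; lra.
    + apply Rmult_le_pos; [lra|]. apply Rlt_le, Rinv_0_lt_compat; lra.
    + apply Rmult_le_pos; [lra|]. apply Rlt_le, Rinv_0_lt_compat; lra.
    + field. lra.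
  - unfold toR; simpl. rewrite !plus_IZR, !mult_IZR. fold U W. f_equal; field; lra.
Qed.

Lemma least_nat (Pn : nat -> Prop) : (exists n, Pn n) ->
  exists n, Pn n /\ forall m, Pn m -> (n <= m)%nat.
Proof.
  intros Hex.
  destruct (dec_inh_nat_subset_has_unique_least_element Pn (fun n => classic (Pn n)) Hex)
    as [n [[Hn Hmin] _]].
  exists n. split; auto.
Qed.

Lemma gcd_of_bez c1 c2 x y : (x * c1 + y * c2 = 1)%Z -> primitive_vec (c1, c2).
Proof.
  intros H. unfold primitive_vec; simpl. apply Z.bezout_1_gcd. exists x, y. exact H.
Qed.

Lemma ups_fwd d x : (1 <= d)%Z -> Upsilon_pred d x ->
  snd x <= IZR d * fst x /\ fst x <= IZR d * snd x /\ fst x + snd x <= IZR d + 1.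
Proof.
  intros Hd Hx. apply IZR_le in Hd.
  assert (Hv : forall z, In z ((0,0)%Z :: (1,d)%Z :: (d,1)%Z :: nil) ->
     (IZR (fst z) = 0 /\ IZR (snd z) = 0) \/ (IZR (fst z) = 1 /\ IZR (snd z) = IZR d) \/
     (IZR (fst z) = IZR d /\ IZR (snd z) = 1)).
  { intros z [<-|[<-|[<-|[]]]]; simpl; auto. }
  split; [|split].
  - assert (H := conv_le _ x (- IZR d) 1 0 0 Hx). enough (- IZR d * fst x + 1 * snd x + 0 <= 0) by lra.
    apply H. intros z Hz. destruct (Hv z Hz) as [[-> ->]|[[-> ->]|[-> ->]]]; nra.
  - assert (H := conv_le _ x 1 (- IZR d) 0 0 Hx). enough (1 * fst x + - IZR d * snd x + 0 <= 0) by lra.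
    apply H. intros z Hz. destruct (Hv z Hz) as [[-> ->]|[[-> ->]|[-> ->]]]; nra.
  - assert (H := conv_le _ x 1 1 0 (IZR d + 1) Hx). enough (1 * fst x + 1 * snd x + 0 <= IZR d + 1) by lra.
    apply H. intros z Hz. destruct (Hv z Hz) as [[-> ->]|[[-> ->]|[-> ->]]]; nra.
Qed.

Lemma ups_bwd d x : (2 <= d)%Z ->
  snd x <= IZR d * fst x -> fst x <= IZR d * snd x -> fst x + snd x <= IZR d + 1 ->
  exists l1 l2, 0 <= l1 /\ 0 <= l2 /\ l1 + l2 <= 1 /\
    fst x = l1 * 1 + l2 * IZR d /\ snd x = l1 * IZR d + l2 * 1 /\ Upsilon_pred d x.
Proof.
  intros Hd H1 H2 H3. apply IZR_le in Hd. set (D := IZR d) in *.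
  destruct x as [X Y]; simpl in *.
  set (l1 := (D * Y - X) / (D * D - 1)). set (l2 := (D * X - Y) / (D * D - 1)).
  assert (HD : 0 < D * D - 1) by nra.
  assert (E1 : X = l1 * 1 + l2 * D) by (unfold l1, l2; field; lra).
  assert (E2 : Y = l1 * D + l2 * 1) by (unfold l1, l2; field; lra).
  assert (P1 : 0 <= l1) by (unfold l1; apply Rmult_le_pos; [lra|apply Rlt_le, Rinv_0_lt_compat; lra]).
  assert (P2 : 0 <= l2) by (unfold l2; apply Rmult_le_pos; [lra|apply Rlt_le, Rinv_0_lt_compat; lra]).
  assert (P3 : l1 + l2 <= 1).
  { assert (E : l1 + l2 = (X + Y) / (D + 1)) by (unfold l1, l2; field; lra).
    rewrite E. apply (Rmult_le_reg_r (D + 1)); [lra|]. field_simplify; lra. }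
  exists l1, l2. repeat split; auto.
  exists ((1 - l1 - l2, (0,0)%Z) :: (l1, (1,d)%Z) :: (l2, (d,1)%Z) :: nil).
  split; [|split; [|split]].
  - repeat (apply Forall_cons; [simpl; split; [lra|tauto]|]); apply Forall_nil.
  - simpl. ring.
  - simpl. fold D. rewrite E1. ring.
  - simpl. fold D. rewrite E2. ring.
Qed.

Ltac rz := repeat (rewrite ?plus_IZR, ?minus_IZR, ?mult_IZR, ?opp_IZR in *).

Lemma divide_of_eq (k x c : Z) : x = (c * k)%Z -> (k | x)%Z.
Proof. intros ->. exists c. ring. Qed.

Lemma main_w (S : list zpt) (d : Z) (P w : zpt) (a : R) (B : Z) (sb : zpt) :
  lw (polygon S) (IZR d) -> (0 < d)%Z ->
  polygon S (toR P) ->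
  primitive_vec w ->
  In sb S -> (dotZ sb w - dotZ P w = B)%Z ->
  (forall z, In z S -> (dotZ z w - dotZ P w <= B)%Z) ->
  (forall z z', polygon S (toR z) -> polygon S (toR z') -> z <> P -> z' <> P ->
      IZR (dotZ z' w - dotZ z w) <= a) ->
  0 <= a -> a < IZR d -> a < IZR B - 1 ->
  unimod_equiv (polygon S) (Upsilon_pred d).
Proof.
  intros Hlw Hd0 HP Hprim Hsb HsbB HSB Ha Ha0 Had HaB.
  assert (HS : S <> nil) by (intros ->; inversion Hsb).
  destruct P as [px py], w as [w1 w2]. unfold dotZ in *; simpl in *.
  assert (HB1 : (1 < B)%Z) by (apply lt_IZR; lra).
  assert (HsbP : sb <> (px, py)) by (intros ->; simpl in HsbB; lia).
  assert (Hsbin : polygon S (toR sb)) by (apply conv1; auto).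
  assert (Hlev : forall z, polygon S (toR z) -> z <> (px, py) ->
            (2 <= (fst z - px) * w1 + (snd z - py) * w2)%Z).
  { intros z Hz HzP. specialize (Ha z sb Hz Hsbin HzP HsbP).
    assert (H : IZR 1 < IZR ((fst z - px) * w1 + (snd z - py) * w2)).
    { rewrite <- HsbB in HaB. rz. lra. }
    apply lt_IZR in H. lia. }
  destruct (least_nat (fun n => exists z, polygon S (toR z) /\ z <> (px, py) /\
              ((fst z - px) * w1 + (snd z - py) * w2 = Z.of_nat n)%Z)) as [n0 [[Q0 [HQ0 [HQ0P HQ0k]]] Hmin]].
  { exists (Z.to_nat B). exists sb. repeat split; auto. rewrite Z2Nat.id by lia. lia. }
  set (k := Z.of_nat n0) in *.
  assert (Hmin' : forall z, polygon S (toR z) -> z <> (px, py) ->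
            (k <= (fst z - px) * w1 + (snd z - py) * w2)%Z).
  { intros z Hz HzP. specialize (Hlev z Hz HzP).
    assert (n0 <= Z.to_nat ((fst z - px) * w1 + (snd z - py) * w2))%nat.
    { apply Hmin. exists z. repeat split; auto. rewrite Z2Nat.id by lia. reflexivity. }
    unfold k. lia. }
  assert (Hk2 : (2 <= k)%Z) by (rewrite <- HQ0k; apply Hlev; auto).
  assert (HBk : (B - k < d)%Z).
  { apply lt_IZR. specialize (Ha Q0 sb HQ0 Hsbin HQ0P HsbP).
    rewrite minus_IZR. rewrite <- HQ0k, <- HsbB. rewrite <- HsbB in HaB.
    rz. lra. }
  destruct Q0 as [qx qy]. simpl in HQ0k.
  set (dx := (qx - px)%Z) in *. set (dy := (qy - py)%Z) in *.
  assert (HQ0e : (qx, qy) = (px + dx, py + dy)%Z) by (unfold dx, dy; f_equal; ring).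
  assert (Hg : Z.gcd dx dy = 1%Z).
  { set (g := Z.gcd dx dy).
    assert (Hg0 : (0 <= g)%Z) by apply Z.gcd_nonneg.
    destruct (Z.eq_dec g 1) as [|Hne]; auto. exfalso.
    destruct (Z.eq_dec g 0) as [Hz|Hnz].
    { apply Z.gcd_eq_0 in Hz. destruct Hz as [Hx Hy]. rewrite Hx, Hy in HQ0k. lia. }
    destruct (Z.gcd_divide_l dx dy) as [x' Hx']. destruct (Z.gcd_divide_r dx dy) as [y' Hy'].
    fold g in Hx', Hy'.
    assert (Hseg : polygon S (toR (px + x', py + y')%Z)).
    { apply (seg_point _ _ _ _ _ g); auto; [|lia].
      replace (px + g * x')%Z with qx by lia. replace (py + g * y')%Z with qy by lia. auto. }
    assert (Hne2 : (px + x', py + y')%Z <> (px, py)).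
    { intros He. injection He; intros. assert (x' = 0%Z) by lia. assert (y' = 0%Z) by lia.
      subst. rewrite Hx', Hy' in HQ0k. lia. }
    specialize (Hmin' _ Hseg Hne2). simpl in Hmin'.
    assert (E : k = (g * ((px + x' - px) * w1 + (py + y' - py) * w2))%Z).
    { rewrite <- HQ0k. rewrite Hx', Hy'. ring. }
    nia. }
  destruct (Z.gcd_bezout dx dy 1 Hg) as [u0 [v0 Huv]].
  set (x1 := v0). set (y1 := (- u0)%Z).
  set (r0 := (x1 * w1 + y1 * w2)%Z).
  set (t := (r0 / k)%Z).
  set (a1 := (x1 - t * dx)%Z). set (b1 := (y1 - t * dy)%Z).
  set (q2 := (a1 * w1 + b1 * w2)%Z).
  assert (Hq2e : q2 = (r0 mod k)%Z).
  { assert (Hdm := Z.div_mod r0 k ltac:(lia)). unfold q2, a1, b1. fold t in Hdm.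
    rewrite <- HQ0k in Hdm |- *. unfold r0 in *. lia. }
  assert (Hq2b : (0 <= q2 < k)%Z) by (rewrite Hq2e; apply Z.mod_pos_bound; lia).
  assert (Hdet0 : (a1 * dy - b1 * dx = 1)%Z) by (unfold a1, b1, x1, y1; lia).
  assert (Hq2p : (1 <= q2)%Z).
  { destruct (Z.eq_dec q2 0) as [Hq0|]; [|lia]. exfalso.
    assert (E1 : w1 = (- b1 * k)%Z).
    { assert (a1 * w1 = -(b1 * w2))%Z by (unfold q2 in Hq0; lia).
      transitivity (w1 * (a1 * dy - b1 * dx))%Z; [rewrite Hdet0; ring|].
      replace (w1 * (a1 * dy - b1 * dx))%Z with (dy * (a1 * w1) - b1 * (dx * w1))%Z by ring.
      rewrite H. rewrite <- HQ0k. ring. }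
    assert (E2 : w2 = (a1 * k)%Z).
    { assert (b1 * w2 = -(a1 * w1))%Z by (unfold q2 in Hq0; lia).
      transitivity (w2 * (a1 * dy - b1 * dx))%Z; [rewrite Hdet0; ring|].
      replace (w2 * (a1 * dy - b1 * dx))%Z with (a1 * (dy * w2) - dx * (b1 * w2))%Z by ring.
      rewrite H. rewrite <- HQ0k. ring. }
    assert (Hdv : (k | Z.gcd w1 w2)%Z).
    { apply Z.gcd_greatest; [apply (divide_of_eq _ _ _ E1)|apply (divide_of_eq _ _ _ E2)]. }
    unfold primitive_vec in Hprim; simpl in Hprim. rewrite Hprim in Hdv.
    apply Z.divide_1_r in Hdv. lia. }
  assert (Hq2def : q2 = (a1*w1+b1*w2)%Z) by reflexivity.
  clearbody a1 b1 q2. clear Hq2e t r0 x1 y1 Huv u0 v0.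
  set (a2 := (dx - a1)%Z). set (b2 := (dy - b1)%Z).
  set (q1 := (a2 * w1 + b2 * w2)%Z).
  assert (Hq12 : (q1 + q2 = k)%Z) by (unfold q1, a2, b2; rewrite <- HQ0k, Hq2def; ring).
  assert (Hdet : (a1 * b2 - a2 * b1 = 1)%Z) by (unfold a2, b2; nia).
  assert (Hq1def : q1 = (a2 * w1 + b2 * w2)%Z) by reflexivity.
  assert (HQ0' : polygon S (toR (px + a1 + a2, py + b1 + b2)%Z)).
  { replace (px + a1 + a2)%Z with qx by (unfold a2, dx; ring).
    replace (py + b1 + b2)%Z with qy by (unfold b2, dy; ring). auto. }
  clearbody a2 b2 q1.
  assert (HX : forall X Y, X = ((X * b2 - Y * a2) * a1 + (a1 * Y - b1 * X) * a2)%Z).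
  { intros X Y. transitivity (X * (a1 * b2 - a2 * b1))%Z; [rewrite Hdet; ring|ring]. }
  assert (HY : forall X Y, Y = ((X * b2 - Y * a2) * b1 + (a1 * Y - b1 * X) * b2)%Z).
  { intros X Y. transitivity (Y * (a1 * b2 - a2 * b1))%Z; [rewrite Hdet; ring|ring]. }
  assert (HL : forall X Y, (X * w1 + Y * w2 = q2 * (X * b2 - Y * a2) + q1 * (a1 * Y - b1 * X))%Z).
  { intros X Y. transitivity ((X * w1 + Y * w2) * (a1 * b2 - a2 * b1))%Z; [rewrite Hdet; ring|].
    rewrite Hq1def, Hq2def. ring. }
  assert (Hq1p : (1 <= q1)%Z) by lia.
  assert (Hne1 : (px + a1, py + b1)%Z <> (px, py)).
  { intros He. injection He; intros. assert (a1 = 0%Z) by lia. assert (b1 = 0%Z) by lia. subst. lia. }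
  assert (Hne2 : (px + a2, py + b2)%Z <> (px, py)).
  { intros He. injection He; intros. assert (a2 = 0%Z) by lia. assert (b2 = 0%Z) by lia. subst. lia. }
  assert (K3 : forall zx zy, polygon S (toR (zx, zy)) -> (zx, zy) <> (px, py) ->
     (1 <= (zx - px) * b2 - (zy - py) * a2)%Z /\ (1 <= a1 * (zy - py) - b1 * (zx - px))%Z).
  { intros zx zy Hz HzP.
    assert (Hk := Hmin' _ Hz HzP). simpl in Hk. rewrite HL in Hk.
    set (u := ((zx - px) * b2 - (zy - py) * a2)%Z) in *.
    set (w := (a1 * (zy - py) - b1 * (zx - px))%Z) in *.
    assert (Ez : (zx, zy) = (px + u * a1 + w * a2, py + u * b1 + w * b2)%Z).
    { f_equal.
      - assert (H1 := HX (zx - px)%Z (zy - py)%Z). fold u w in H1. lia.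
      - assert (H1 := HY (zx - px)%Z (zy - py)%Z). fold u w in H1. lia. }
    rewrite Ez in Hz.
    split.
    - destruct (Z_le_gt_dec 1 u) as [|Hu]; auto. exfalso.
      assert (q2 * u <= 0)%Z by nia.
      assert (Hw : (1 <= w)%Z) by nia.
      assert (Hp := tri_point _ px py a1 b1 a2 b2 u w HP HQ0' Hz ltac:(lia) Hw).
      specialize (Hmin' _ Hp Hne2). simpl in Hmin'.
      replace (px + a2 - px)%Z with a2 in Hmin' by ring.
      replace (py + b2 - py)%Z with b2 in Hmin' by ring. lia.
    - destruct (Z_le_gt_dec 1 w) as [|Hw]; auto. exfalso.
      assert (q1 * w <= 0)%Z by nia.
      assert (Hu : (1 <= u)%Z) by nia.
      assert (HQ'' : polygon S (toR (px + a2 + a1, py + b2 + b1)%Z)).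
      { replace (px + a2 + a1)%Z with (px + a1 + a2)%Z by ring.
        replace (py + b2 + b1)%Z with (py + b1 + b2)%Z by ring. auto. }
      assert (Hz' : polygon S (toR (px + w * a2 + u * a1, py + w * b2 + u * b1)%Z)).
      { replace (px + w * a2 + u * a1)%Z with (px + u * a1 + w * a2)%Z by ring.
        replace (py + w * b2 + u * b1)%Z with (py + u * b1 + w * b2)%Z by ring. auto. }
      assert (Hp := tri_point _ px py a2 b2 a1 b1 w u HP HQ'' Hz' ltac:(lia) Hu).
      specialize (Hmin' _ Hp Hne1). simpl in Hmin'.
      replace (px + a1 - px)%Z with a1 in Hmin' by ring.
      replace (py + b1 - py)%Z with b1 in Hmin' by ring. lia. }
  set (U := fun z : zpt => ((fst z - px) * b2 - (snd z - py) * a2)%Z).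
  set (W := fun z : zpt => (a1 * (snd z - py) - b1 * (fst z - px))%Z).
  assert (SP : forall z, In z S -> z = (px, py) \/
     (z <> (px, py) /\ (1 <= U z)%Z /\ (1 <= W z)%Z /\ (k <= q2 * U z + q1 * W z <= B)%Z)).
  { intros [zx zy] Hz. destruct (classic ((zx, zy) = (px, py))) as [|Hne]; [left; auto|right].
    assert (Hzin : polygon S (toR (zx, zy))) by (apply conv1; auto).
    destruct (K3 zx zy Hzin Hne) as [K3a K3b].
    assert (Hk := Hmin' _ Hzin Hne). specialize (HSB _ Hz). simpl in *.
    rewrite HL in Hk. assert (HL' := HL (zx - px)%Z (zy - py)%Z).
    unfold U, W; simpl. repeat split; auto; lia. }
  assert (EU : forall z, dotZ z (b2, (- a2)%Z) = (U z + (px * b2 - py * a2))%Z).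
  { intros [zx zy]. unfold dotZ, U; simpl. ring. }
  assert (EW : forall z, dotZ z ((- b1)%Z, a1) = (W z + (a1 * py - b1 * px))%Z).
  { intros [zx zy]. unfold dotZ, W; simpl. ring. }
  assert (EUW : forall z, dotZ z ((b2 + b1)%Z, (- a2 - a1)%Z) =
                (U z - W z + (px * (b2 + b1) - py * (a2 + a1)))%Z).
  { intros [zx zy]. unfold dotZ, U, W; simpl. ring. }
  assert (PU : primitive_vec (b2, (- a2)%Z)) by (apply (gcd_of_bez _ _ a1 b1); lia).
  assert (PW : primitive_vec ((- b1)%Z, a1)) by (apply (gcd_of_bez _ _ a2 b2); lia).
  assert (PUW : primitive_vec ((b2 + b1)%Z, (- a2 - a1)%Z)) by (apply (gcd_of_bez _ _ a1 b1); lia).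
  assert (UP : U (px, py) = 0%Z) by (unfold U; simpl; ring).
  assert (WP : W (px, py) = 0%Z) by (unfold W; simpl; ring).
  destruct (classic (exists z, In z S /\ (d <= U z)%Z)) as [[zu [Hzu HUzu]]|Hno].
  2:{ exfalso.
      assert (H := lw_bound S d _ (px * b2 - py * a2) (d - 1 + (px * b2 - py * a2)) Hlw HS PU).
      cut (d <= d - 1 + (px * b2 - py * a2) - (px * b2 - py * a2))%Z; [lia|]. apply H. intros z Hz. rewrite EU.
      destruct (classic (d <= U z)%Z) as [Hc|Hc]. { exfalso; apply Hno; exists z; auto. }
      destruct (SP z Hz) as [->|[_ [? _]]]; lia. }
  destruct (classic (exists z, In z S /\ (d <= W z)%Z)) as [[zw [Hzw HWzw]]|Hno].
  2:{ exfalso.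
      assert (H := lw_bound S d _ (a1 * py - b1 * px) (d - 1 + (a1 * py - b1 * px)) Hlw HS PW).
      cut (d <= d - 1 + (a1 * py - b1 * px) - (a1 * py - b1 * px))%Z; [lia|]. apply H. intros z Hz. rewrite EW.
      destruct (classic (d <= W z)%Z) as [Hc|Hc]. { exfalso; apply Hno; exists z; auto. }
      destruct (SP z Hz) as [->|[_ [_ [? _]]]]; lia. }
  destruct (SP zu Hzu) as [Ezu|[_ [U1 [W1 [L1 L2]]]]]. { rewrite Ezu in HUzu. lia. }
  destruct (SP zw Hzw) as [Ezw|[_ [U1' [W1' [L1' L2']]]]]. { rewrite Ezw in HWzw. lia. }
  assert (I1 : (q2 * d + q1 <= B)%Z).
  { assert (q2 * d <= q2 * U zu)%Z by (apply Z.mul_le_mono_nonneg_l; lia).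
    assert (q1 * 1 <= q1 * W zu)%Z by (apply Z.mul_le_mono_nonneg_l; lia). lia. }
  assert (I2 : (q1 * d + q2 <= B)%Z).
  { assert (q1 * d <= q1 * W zw)%Z by (apply Z.mul_le_mono_nonneg_l; lia).
    assert (q2 * 1 <= q2 * U zw)%Z by (apply Z.mul_le_mono_nonneg_l; lia). lia. }
  destruct (Z.eq_dec d 1) as [Hd1|Hd2].
  { exfalso. subst d.
    assert (H := lw_bound S 1 _ (px * (b2 + b1) - py * (a2 + a1)) (px * (b2 + b1) - py * (a2 + a1)) Hlw HS PUW).
    cut (1 <= (px * (b2 + b1) - py * (a2 + a1) - (px * (b2 + b1) - py * (a2 + a1))))%Z; [lia|].
    apply H. intros z Hz. rewrite EUW.
    destruct (SP z Hz) as [->|[_ [Ua [Wa [La Lb]]]]]. { rewrite UP, WP. lia. }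
    assert (1 * (U z - 1) <= q2 * (U z - 1))%Z by (apply Z.mul_le_mono_nonneg_r; lia).
    assert (1 * (W z - 1) <= q1 * (W z - 1))%Z by (apply Z.mul_le_mono_nonneg_r; lia).
    lia. }
  assert (Hq2 : q2 = 1%Z).
  { destruct (Z_le_gt_dec q2 1); [lia|].
    assert (2 * (d - 1) <= q2 * (d - 1))%Z by (apply Z.mul_le_mono_nonneg_r; lia). lia. }
  assert (Hq1 : q1 = 1%Z).
  { destruct (Z_le_gt_dec q1 1); [lia|].
    assert (2 * (d - 1) <= q1 * (d - 1))%Z by (apply Z.mul_le_mono_nonneg_r; lia). lia. }
  clear Hq1def Hq2def. subst q1 q2.
  assert (HBd : B = (d + 1)%Z) by lia.
  assert (Hzu1 : U zu = d /\ W zu = 1%Z) by lia.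
  assert (Hzw1 : U zw = 1%Z /\ W zw = d) by lia.
  assert (Hd2' : (2 <= d)%Z) by lia.
  assert (Hpt : forall z, In z S -> (W z <= d * U z /\ U z <= d * W z /\ U z + W z <= d + 1)%Z).
  { intros z Hz. destruct (SP z Hz) as [->|[_ [Ua [Wa [La Lb]]]]].
    - rewrite UP, WP. lia.
    - assert (d * 1 <= d * U z)%Z by (apply Z.mul_le_mono_nonneg_l; lia).
      assert (d * 1 <= d * W z)%Z by (apply Z.mul_le_mono_nonneg_l; lia). lia. }
  set (c1 := (- (px * b2 - py * a2))%Z). set (c2 := (- (a1 * py - b1 * px))%Z).
  assert (MU : forall z, IZR b2 * IZR (fst z) + IZR (- a2) * IZR (snd z) + IZR c1 = IZR (U z)).
  { intros z. unfold U, c1. rz. ring. }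
  assert (MW : forall z, IZR (- b1) * IZR (fst z) + IZR a1 * IZR (snd z) + IZR c2 = IZR (W z)).
  { intros z. unfold W, c2. rz. ring. }
  assert (aff3 : forall (A1 A2 C r s t x1 x2 x3 y1 y2 y3 : R), r + s + t = 1 ->
     A1 * (r * x1 + s * x2 + t * x3) + A2 * (r * y1 + s * y2 + t * y3) + C =
     r * (A1 * x1 + A2 * y1 + C) + s * (A1 * x2 + A2 * y2 + C) + t * (A1 * x3 + A2 * y3 + C)).
  { intros. replace C with ((r + s + t) * C) at 1 by (rewrite H; ring). ring. }
  exists b2, (- a2)%Z, (- b1)%Z, a1, c1, c2. split; [left; lia|].
  intros x. split.
  - intros Hx.
    destruct (ups_fwd d x ltac:(lia) Hx) as [J1 [J2 J3]].
    destruct (ups_bwd d x Hd2' J1 J2 J3) as [l1 [l2 [P1 [P2 [P3 [Ex [Ey _]]]]]]].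
    assert (Hzuin : polygon S (toR zu)) by (apply conv1; auto).
    assert (Hzwin : polygon S (toR zw)) by (apply conv1; auto).
    eexists. split.
    + apply (conv3 _ _ _ _ (1 - l1 - l2) l2 l1 HP Hzuin Hzwin); lra.
    + destruct x as [X Y]; simpl in *. f_equal.
      * rewrite aff3 by ring. rewrite !MU. rewrite (proj1 Hzu1), (proj1 Hzw1). rewrite Ex.
        assert (MP : IZR b2 * IZR px + IZR (- a2) * IZR py + IZR c1 = 0) by (unfold c1; rz; ring).
        rewrite MP. ring.
      * rewrite aff3 by ring. rewrite !MW. rewrite (proj2 Hzu1), (proj2 Hzw1). rewrite Ey.
        assert (MP : IZR (- b1) * IZR px + IZR a1 * IZR py + IZR c2 = 0) by (unfold c2; rz; ring).
        rewrite MP. ring.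
  - intros [y [Hy ->]].
    set (mx := IZR b2 * fst y + IZR (- a2) * snd y + IZR c1).
    set (my := IZR (- b1) * fst y + IZR a1 * snd y + IZR c2).
    assert (J1 : my <= IZR d * mx).
    { assert (H := conv_le _ y (IZR (- b1) - IZR d * IZR b2) (IZR a1 - IZR d * IZR (- a2))
                    (IZR c2 - IZR d * IZR c1) 0 Hy).
      unfold mx, my. enough ((IZR (- b1) - IZR d * IZR b2) * fst y + (IZR a1 - IZR d * IZR (- a2)) * snd y +
                    (IZR c2 - IZR d * IZR c1) <= 0) by lra.
      apply H. intros z Hz. destruct (Hpt z Hz) as [K _]. apply IZR_le in K.
      rewrite ?plus_IZR, ?mult_IZR in K. rewrite <- MU, <- MW in K. lra. }
    assert (J2 : mx <= IZR d * my).
    { assert (H := conv_le _ y (IZR b2 - IZR d * IZR (- b1)) (IZR (- a2) - IZR d * IZR a1)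
                    (IZR c1 - IZR d * IZR c2) 0 Hy).
      unfold mx, my. enough ((IZR b2 - IZR d * IZR (- b1)) * fst y + (IZR (- a2) - IZR d * IZR a1) * snd y +
                    (IZR c1 - IZR d * IZR c2) <= 0) by lra.
      apply H. intros z Hz. destruct (Hpt z Hz) as [_ [K _]]. apply IZR_le in K.
      rewrite ?plus_IZR, ?mult_IZR in K. rewrite <- MU, <- MW in K. lra. }
    assert (J3 : mx + my <= IZR d + 1).
    { assert (H := conv_le _ y (IZR b2 + IZR (- b1)) (IZR (- a2) + IZR a1)
                    (IZR c1 + IZR c2) (IZR d + 1) Hy).
      unfold mx, my. enough ((IZR b2 + IZR (- b1)) * fst y + (IZR (- a2) + IZR a1) * snd y +
                    (IZR c1 + IZR c2) <= IZR d + 1) by lra.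
      apply H. intros z Hz. destruct (Hpt z Hz) as [_ [_ K]]. apply IZR_le in K.
      rewrite ?plus_IZR, ?mult_IZR in K. rewrite <- MU, <- MW in K. lra. }
    destruct (ups_bwd d (mx, my) Hd2' J1 J2 J3) as [l1 [l2 [_ [_ [_ [_ [_ Hu]]]]]]].
    exact Hu.
Qed.

Theorem lemma2p2 (S : list zpt) (d : Z) (P v : zpt) (a b : R) :
  S <> nil ->
  lw (polygon S) (IZR d) -> (0 < d)%Z ->
  is_vertex (polygon S) (toR P) ->
  primitive_vec v ->
  lw_dir (remove_vertex (polygon S) P) v a ->
  lw_dir (polygon S) v b ->
  a < IZR d -> a < b - 1 ->
  unimod_equiv (polygon S) (Upsilon_pred d).
Proof.
  intros HS Hlw Hd [HP _] Hprim HaDir HbDir Had Hab.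
  destruct (lw_dir_pair S v b HS HbDir) as [s1 [s2 [H1 [H2 [Hb Hbd]]]]].
  assert (Ha : forall z z', polygon S (toR z) -> polygon S (toR z') -> z <> P -> z' <> P ->
      IZR (dotZ z' v - dotZ z v) <= a).
  { intros z z' Hz Hz' HzP Hz'P. destruct HaDir as [_ HaDir].
    rewrite minus_IZR, <- !dot_toR. apply HaDir; apply conv1; split; auto. }
  assert (Ha0 : 0 <= a).
  { destruct HaDir as [[x [y [Hx [Hy Hxy]]]] HaDir]. specialize (HaDir y x Hy Hx). lra. }
  destruct (classic (s1 = P)) as [E1|N1].
  - subst s1. apply (main_w S d P v a (dotZ s2 v - dotZ P v) s2); auto.
    + intros z Hz. specialize (Hbd z Hz). lia.
    + rewrite Hb. auto.
  - destruct (classic (s2 = P)) as [E2|N2].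
    + subst s2. destruct v as [v1 v2].
      assert (Eneg : forall z, dotZ z ((- v1)%Z, (- v2)%Z) = (- dotZ z (v1, v2))%Z).
      { intros [zx zy]. unfold dotZ; simpl. ring. }
      apply (main_w S d P ((- v1)%Z, (- v2)%Z) a (dotZ P (v1, v2) - dotZ s1 (v1, v2)) s1); auto.
      * unfold primitive_vec in *; simpl in *. rewrite Z.gcd_opp_l, Z.gcd_opp_r. auto.
      * rewrite !Eneg. ring.
      * intros z Hz. rewrite !Eneg. specialize (Hbd z Hz). lia.
      * intros z z' Hz Hz' HzP Hz'P. rewrite !Eneg.
        specialize (Ha z' z Hz' Hz Hz'P HzP). replace (- dotZ z' (v1, v2) - - dotZ z (v1, v2))%Z
          with (dotZ z (v1, v2) - dotZ z' (v1, v2))%Z by ring. auto.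
      * rewrite <- Hb in Hab. rewrite !minus_IZR in *. lra.
    + exfalso. specialize (Ha s1 s2 ltac:(apply conv1; auto) ltac:(apply conv1; auto) N1 N2).
      rewrite Hb in Ha. lra.
Qed.
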